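(* Let $A\in\mathbb{C}^{m\times n}$ and $B\in\mathbb{C}^{n\times p}$. Then each of the following sets of matrices is contained in $\{(AB)^{(1)}\}$: $$\{(A^{(1)}AB)^{(1)}A^{(1)}\},\quad \{B^{(1)}(ABB^{(1)})^{(1)}\},\quad \{(A^{*}AB)^{(1)}A^{*}\},\quad \{B^{*}(ABB^{*})^{(1)}\},\quad \{(AA^{*}AB)^{(1)}AA^{*}\},$$ $$\{B^{*}B(ABB^{*}B)^{(1)}\},\quad \{B^{(1)}(A^{(1)}ABB^{(1)})^{(1)}A^{(1)}\},\quad \{B^{*}(A^{*}ABB^{*})^{(1)}A^{*}\},\quad \{B^{*}B(AA^{*}ABB^{*}B)^{(1)}AA^{*}\}.$$
   Context: For a complex matrix $X$, $X^*$ is its conjugate transpose, $r(X)$ its rank and $\mathscr{R}(X)$ its column space. For $X\in\mathbb{C}^{p\times q}$, a matrix $G\in\mathbb{C}^{q\times p}$ is called an $\{i,\ldots,j\}$-generalized inverse of $X$ (written $X^{(i,\ldots,j)}$) if it satisfies the equations numbered $i,\ldots,j$ among the four Penrose equations (i) $XGX=X$, (ii) $GXG=G$, (iii) $(XG)^*=XG$, (iv) $(GX)^*=GX$; $\{X^{(i,\ldots,j)}\}$ denotes the set of all such $G$. The Moore–Penrose inverse $X^\dagger$ is the unique matrix satisfying all four equations. For a matrix expression involving generalized inverses, $\{\cdot\}$ denotes the set of all values of the expression as each generalized inverse occurring in it ranges over all admissible choices; repeated occurrences of the same symbol (e.g. $A^{(1)}$ appearing twice) denote one and the same choice, and a generalized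 inverse of a matrix that itself contains a chosen generalized inverse is taken with respect to that chosen matrix. *)

(* Defs.v *)
(* Complex matrices are modelled over an arbitrary
   numClosedFieldType C (algebraically closed field with conjugation,
   e.g. the complex numbers); this is a generalization of C = complex. *)
From HB Require Import structures.
From mathcomp Require Import all_boot all_order all_algebra.
Set Implicit Arguments. Unset Strict Implicit. Unset Printing Implicit Defensive.
Import Order.TTheory GRing.Theory Num.Theory.
Local Open Scope ring_scope.

Definition ctmx (C : numClosedFieldType) (p q : nat) (X : 'M[C]_(p, q)) : 'M[C]_(q, p) :=
  (map_mx (fun x => x^*) X)^T.

Definition g1inv (C : numClosedFieldType) (p q : nat)
  (X : 'M[C]_(p, q)) (G : 'M[C]_(q, p)) : Prop :=
  X *m G *m X = X.

(* Main.v *)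
Require Import Defs.
From HB Require Import structures.
From mathcomp Require Import all_boot all_order all_algebra.
Import Order.TTheory GRing.Theory Num.Theory.
Local Open Scope ring_scope.

Section S.
Variable C : numClosedFieldType.

Lemma ctmxM (a b c : nat) (X : 'M[C]_(a,b)) (Y : 'M[C]_(b,c)) :
  ctmx (X *m Y) = ctmx Y *m ctmx X.
Proof.
rewrite /ctmx -trmx_mul; congr (_^T); apply/matrixP=> i j.
by rewrite !mxE rmorph_sum; apply: eq_bigr => k _; rewrite !mxE rmorphM.
Qed.

Lemma ctmxK (a b : nat) (X : 'M[C]_(a,b)) : ctmx (ctmx X) = X.
Proof. by apply/matrixP=> i j; rewrite !mxE conjCK. Qed.

Lemma ctmxB (a b : nat) (X Y : 'M[C]_(a,b)) : ctmx (X - Y) = ctmx X - ctmx Y.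
Proof. by apply/matrixP=> i j; rewrite !mxE rmorphB. Qed.

Lemma ctmx_eq0 (a b : nat) (D : 'M[C]_(a,b)) : ctmx D *m D = 0 -> D = 0.
Proof.
move=> H; apply/matrixP=> i j; rewrite mxE.
have := congr1 (fun M : 'M[C]_b => M j j) H; rewrite !mxE => Hs.
have Hs' : \sum_(k < a) D k j * (D k j)^* = 0.
  rewrite -[RHS]Hs; apply: eq_bigr => k _; by rewrite /ctmx !mxE mulrC.
have := psumr_eq0P (fun k _ => mul_conjC_ge0 (D k j)) Hs' (isT : predT i).
by move=> E; apply/eqP; rewrite -mul_conjC_eq0 E.
Qed.

Lemma Lc (a b c : nat) (A : 'M[C]_(a,b)) (X Y : 'M[C]_(b,c)) :
  ctmx A *m A *m X = ctmx A *m A *m Y -> A *m X = A *m Y.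
Proof.
move=> H; apply/eqP; rewrite -subr_eq0; apply/eqP; apply: ctmx_eq0.
have E : ctmx A *m (A *m (X - Y)) = 0.
  by rewrite !mulmxBr !mulmxA H subrr.
by rewrite -mulmxBr ctmxM -mulmxA E mulmx0.
Qed.

Lemma Rc (a b c : nat) (B : 'M[C]_(b,c)) (X Y : 'M[C]_(a,b)) :
  X *m B *m ctmx B = Y *m B *m ctmx B -> X *m B = Y *m B.
Proof.
move=> H.
have H' : ctmx (ctmx B) *m ctmx B *m ctmx X = ctmx (ctmx B) *m ctmx B *m ctmx Y.
  by rewrite -!ctmxM !mulmxA H.
have := Lc _ _ _ _ _ _ H'; rewrite -!ctmxM => E; by rewrite -(ctmxK _ _ (X *m B)) E ctmxK.
Qed.

Lemma LcR (a b c : nat) (A : 'M[C]_(a,b)) (X Y : 'M[C]_(b,c)) :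
  ctmx A *m (A *m X) = ctmx A *m (A *m Y) -> A *m X = A *m Y.
Proof. by rewrite !mulmxA; apply: Lc. Qed.

Lemma LcR' (a b c : nat) (A : 'M[C]_(a,b)) (X Y : 'M[C]_(a,c)) :
  A *m (ctmx A *m X) = A *m (ctmx A *m Y) -> ctmx A *m X = ctmx A *m Y.
Proof. by rewrite -{1 3}(ctmxK _ _ A); apply: LcR. Qed.

Lemma Rc' (a b c : nat) (B : 'M[C]_(b,c)) (X Y : 'M[C]_(a,c)) :
  X *m ctmx B *m B = Y *m ctmx B *m B -> X *m ctmx B = Y *m ctmx B.
Proof. by rewrite -{2 4}(ctmxK _ _ B); apply: Rc. Qed.

End S.
Arguments LcR {C a b c A X Y}.
Arguments LcR' {C a b c A X Y}.
Arguments Rc {C a b c B X Y}.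
Arguments Rc' {C a b c B X Y}.

Theorem theorem3p1 (C : numClosedFieldType) (m n p : nat)
  (A : 'M[C]_(m, n)) (B : 'M[C]_(n, p)) :
  (forall (A1 : 'M[C]_(n, m)) (X : 'M[C]_(p, n)),
     g1inv A A1 -> g1inv (A1 *m A *m B) X -> g1inv (A *m B) (X *m A1)) /\
  (forall (B1 : 'M[C]_(p, n)) (X : 'M[C]_(n, m)),
     g1inv B B1 -> g1inv (A *m B *m B1) X -> g1inv (A *m B) (B1 *m X)) /\
  (forall (X : 'M[C]_(p, n)),
     g1inv (ctmx A *m A *m B) X -> g1inv (A *m B) (X *m ctmx A)) /\
  (forall (X : 'M[C]_(n, m)),
     g1inv (A *m B *m ctmx B) X -> g1inv (A *m B) (ctmx B *m X)) /\
  (forall (X : 'M[C]_(p, m)),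
     g1inv (A *m ctmx A *m A *m B) X -> g1inv (A *m B) (X *m A *m ctmx A)) /\
  (forall (X : 'M[C]_(p, m)),
     g1inv (A *m B *m ctmx B *m B) X -> g1inv (A *m B) (ctmx B *m B *m X)) /\
  (forall (A1 : 'M[C]_(n, m)) (B1 : 'M[C]_(p, n)) (X : 'M[C]_(n, n)),
     g1inv A A1 -> g1inv B B1 -> g1inv (A1 *m A *m B *m B1) X ->
     g1inv (A *m B) (B1 *m X *m A1)) /\
  (forall (X : 'M[C]_(n, n)),
     g1inv (ctmx A *m A *m B *m ctmx B) X ->
     g1inv (A *m B) (ctmx B *m X *m ctmx A)) /\
  (forall (X : 'M[C]_(p, m)),
     g1inv (A *m ctmx A *m A *m B *m ctmx B *m B) X ->
     g1inv (A *m B) (ctmx B *m B *m X *m A *m ctmx A)).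
Proof.
rewrite /g1inv; split; [|split; [|split; [|split; [|split; [|split; [|split; [|split]]]]]]].
- move=> A1 X hA hX.
  have := congr1 (mulmx A) hX; rewrite !mulmxA hA => ->; by [].
- move=> B1 X hB hX.
  have := congr1 (mulmx^~ B) hX; move: hB; rewrite -mulmxA => hB; rewrite -!mulmxA hB => E.
  by rewrite -?mulmxA E.
- move=> X; rewrite -!mulmxA => hX; exact: LcR.
- move=> X; rewrite !mulmxA => hX; exact: Rc.
- move=> X; rewrite -!mulmxA => hX; apply: LcR; exact: LcR'.
- move=> X; rewrite !mulmxA => hX; apply: Rc; exact: Rc'.
- move=> A1 B1 X hA hB hX.
  have := congr1 (fun M => A *m M *m B) hX; rewrite /= !mulmxA hA.
  move: hB; rewrite -mulmxA => hB; rewrite -!mulmxA hB => E.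
  by rewrite -?mulmxA E.
- move=> X hX; rewrite !mulmxA; apply: Rc; rewrite -!mulmxA; apply: LcR.
  by rewrite -!mulmxA in hX.
- move=> X hX; rewrite !mulmxA; apply: Rc; apply: Rc'; rewrite -!mulmxA.
  apply: LcR; apply: LcR'; by rewrite -!mulmxA in hX.
Qed.
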